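(* For every integer $d\ge1$ there exists a hypergraph $H$ of separated $d$-intervals with $\nu(H)=1$ and $\tau(H)=\tau^*(H)=d$.
   Context: Fix $d$ pairwise disjoint copies $L_1,\dots,L_d$ of the real line. A separated $d$-interval is a set $h=h^1\cup\dots\cup h^d$ where each $h^j$ is either empty or a closed interval in $L_j$. A hypergraph of separated $d$-intervals is a finite family of separated $d$-intervals, regarded as a hypergraph on vertex set $L_1\cup\dots\cup L_d$. $\nu(H)$ is the maximum size of a set of pairwise disjoint edges; $\tau(H)$ the minimum size of a set of points meeting every edge; $\tau^*(H)$ the minimum of $\sum_v g(v)$ over finitely supported $g\ge0$ on the vertices with $\sum_{v\in h}g(v)\ge1$ for all edges $h$. *)

(* Defs.v *)
From Stdlib Require Import Reals List.
Import ListNotations.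
Open Scope R_scope.

(* A vertex: a point x on the line L_j, encoded as (j, x) with j < d
   (lines are indexed 0..d-1). *)
Definition point : Type := (nat * R)%type.

(* A separated d-interval: for each line index j, either None (h^j empty)
   or Some (a, b) meaning the closed interval [a, b] in L_j. *)
Definition sepint : Type := nat -> option (R * R).

Definition is_sep_dint (d : nat) (h : sepint) : Prop :=
  forall j a b, h j = Some (a, b) -> a <= b.

Definition mem_sep (d : nat) (p : point) (h : sepint) : Prop :=
  (fst p < d)%nat /\
  exists a b, h (fst p) = Some (a, b) /\ a <= snd p <= b.

Definition is_hypergraph (d : nat) (H : list sepint) : Prop :=
  Forall (is_sep_dint d) H.

Definition disjoint_edges (d : nat) (h1 h2 : sepint) : Prop :=
  forall p, ~ (mem_sep d p h1 /\ mem_sep d p h2).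

Definition is_matching (d : nat) (H M : list sepint) : Prop :=
  incl M H /\ NoDup M /\ ForallOrdPairs (disjoint_edges d) M.

Definition nu_eq (d : nat) (H : list sepint) (k : nat) : Prop :=
  (exists M, is_matching d H M /\ length M = k) /\
  (forall M, is_matching d H M -> (length M <= k)%nat).

Definition is_transversal (d : nat) (H : list sepint) (T : list point) : Prop :=
  forall h, In h H -> exists p, In p T /\ mem_sep d p h.

Definition tau_eq (d : nat) (H : list sepint) (k : nat) : Prop :=
  (exists T, is_transversal d H T /\ length T = k) /\
  (forall T, is_transversal d H T -> (k <= length T)%nat).

(* A finitely supported nonnegative weight function g on vertices,
   given as a list of (vertex, weight) pairs (g(v) = sum of weights
   attached to v). *)
Definition weight_of (d : nat) (g : list (point * R)) (h : sepint) : R :=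
  fold_right Rplus 0
    (map snd (filter (fun pw =>
       if Nat.ltb (fst (fst pw)) d then
         match h (fst (fst pw)) with
         | Some (a, b) =>
             if Rle_dec a (snd (fst pw)) then
               if Rle_dec (snd (fst pw)) b then true else false
             else false
         | None => false
         end
       else false) g)).

Definition total_weight (g : list (point * R)) : R :=
  fold_right Rplus 0 (map snd g).

Definition is_frac_cover (d : nat) (H : list sepint) (g : list (point * R)) : Prop :=
  Forall (fun pw => 0 <= snd pw) g /\
  (forall h, In h H -> 1 <= weight_of d g h).

Definition tau_star_eq (d : nat) (H : list sepint) (t : R) : Prop :=
  (exists g, is_frac_cover d H g /\ total_weight g = t) /\
  (forall g, is_frac_cover d H g -> t <= total_weight g).

(* Main.v *)
Require Import Defs.
From Stdlib Require Import Reals List Lia Lra.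
Import ListNotations.
Open Scope R_scope.

Definition dl (d j u : nat) : nat := if Nat.leb j u then (u - j)%nat else (u + 2*d - j)%nat.
Definition posd (d k : nat) : nat :=
  if Nat.eqb k 0 then 0%nat else if Nat.leb k d then (2*k-1)%nat else (4*d - 2*k)%nat.
Definition pos d j u := posd d (dl d j u).
Definition E d u : sepint := fun j => Some (INR (pos d j u), INR (pos d j u) + 1).
Definition Hd d := map (E d) (seq 0 (2*d)).
Definition sm d u v : nat := if Nat.ltb (u+v) (2*d) then (u+v)%nat else (u+v-2*d)%nat.
Definition cp d u v : point :=
  ((sm d u v / 2)%nat, INR (Nat.max (pos d (sm d u v / 2) u) (pos d (sm d u v / 2) v))).

Lemma dl_spec d j u : ((j <= u)%nat /\ dl d j u = (u - j)%nat) \/ ((u < j)%nat /\ dl d j u = (u + 2*d - j)%nat).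
Proof. unfold dl; destruct (Nat.leb_spec j u); [left|right]; auto. Qed.

Lemma posd_spec d k : (k = 0%nat /\ posd d k = 0%nat) \/ ((1 <= k <= d)%nat /\ posd d k = (2*k-1)%nat)
  \/ ((d < k)%nat /\ posd d k = (4*d-2*k)%nat).
Proof.
  unfold posd; destruct (Nat.eqb_spec k 0); [left; auto|].
  destruct (Nat.leb_spec k d); right; [left|right]; split; auto; lia.
Qed.

Lemma pos_close d u v j : (j < d)%nat -> (u < 2*d)%nat -> (v < 2*d)%nat ->
  ((2*j <= u+v <= 2*j+1)%nat \/ (2*j + 2*d <= u+v <= 2*j+1+2*d)%nat) ->
  (pos d j u <= pos d j v + 1)%nat /\ (pos d j v <= pos d j u + 1)%nat.
Proof.
  intros. unfold pos.
  destruct (dl_spec d j u) as [[? ?]|[? ?]]; destruct (dl_spec d j v) as [[? ?]|[? ?]];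
  destruct (posd_spec d (dl d j u)) as [[? ?]|[[? ?]|[? ?]]];
  destruct (posd_spec d (dl d j v)) as [[? ?]|[[? ?]|[? ?]]]; lia.
Qed.

Lemma pos_inj d j u v : (j < d)%nat -> (u < 2*d)%nat -> (v < 2*d)%nat ->
  pos d j u = pos d j v -> u = v.
Proof.
  intros. unfold pos in *.
  destruct (dl_spec d j u) as [[? ?]|[? ?]]; destruct (dl_spec d j v) as [[? ?]|[? ?]];
  destruct (posd_spec d (dl d j u)) as [[? ?]|[[? ?]|[? ?]]];
  destruct (posd_spec d (dl d j v)) as [[? ?]|[[? ?]|[? ?]]]; lia.
Qed.

Lemma cp_mem d u v : (u < 2*d)%nat -> (v < 2*d)%nat ->
  mem_sep d (cp d u v) (E d u) /\ mem_sep d (cp d u v) (E d v).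
Proof.
  intros Hu Hv. unfold cp.
  assert (Hs : (sm d u v = u + v /\ u + v < 2*d)%nat \/ (sm d u v + 2*d = u + v /\ 2*d <= u+v)%nat).
  { unfold sm; destruct (Nat.ltb_spec (u+v) (2*d)); [left|right]; lia. }
  pose proof (Nat.div_mod (sm d u v) 2 ltac:(lia)).
  pose proof (Nat.mod_upper_bound (sm d u v) 2 ltac:(lia)).
  set (j := (sm d u v / 2)%nat) in *.
  assert (Hj : (j < d)%nat) by lia.
  destruct (pos_close d u v j Hj Hu Hv ltac:(lia)) as [C1 C2].
  split; split; simpl; auto.
  - exists (INR (pos d j u)), (INR (pos d j u) + 1). split; [reflexivity|].
    split; [apply le_INR; lia|].
    assert (Hm : (Nat.max (pos d j u) (pos d j v) <= pos d j u + 1)%nat) by lia.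
    apply le_INR in Hm. rewrite plus_INR, INR_1 in Hm. exact Hm.
  - exists (INR (pos d j v)), (INR (pos d j v) + 1). split; [reflexivity|].
    split; [apply le_INR; lia|].
    assert (Hm : (Nat.max (pos d j u) (pos d j v) <= pos d j v + 1)%nat) by lia.
    apply le_INR in Hm. rewrite plus_INR, INR_1 in Hm. exact Hm.
Qed.

Definition tst (d : nat) (h : sepint) : point * R -> bool :=
  fun pw =>
       if Nat.ltb (fst (fst pw)) d then
         match h (fst (fst pw)) with
         | Some (a, b) =>
             if Rle_dec a (snd (fst pw)) then
               if Rle_dec (snd (fst pw)) b then true else false
             else false
         | None => false
         end
       else false.

Lemma weight_of_eq d g h : weight_of d g h = fold_right Rplus 0 (map snd (filter (tst d h) g)).
Proof. reflexivity. Qed.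

Lemma weight_cons d pw g h :
  weight_of d (pw :: g) h = (if tst d h pw then snd pw else 0) + weight_of d g h.
Proof.
  rewrite !weight_of_eq. cbn [filter]. destruct (tst d h pw); cbn [map fold_right]; ring.
Qed.

Lemma mem_tst d p h c : mem_sep d p h -> tst d h (p, c) = true.
Proof.
  destruct p as [j x]. intros [Hj [a [b [Hh [H1 H2]]]]]. unfold tst. simpl in *.
  rewrite (proj2 (Nat.ltb_lt _ _) Hj). rewrite Hh.
  destruct (Rle_dec a x); [|contradiction]. destruct (Rle_dec x b); [|contradiction]. reflexivity.
Qed.

Lemma tst_E d u pw : tst d (E d u) pw = true ->
  (fst (fst pw) < d)%nat /\ INR (pos d (fst (fst pw)) u) <= snd (fst pw) <= INR (pos d (fst (fst pw)) u) + 1.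
Proof.
  destruct pw as [[j x] c]. unfold tst, E. cbn [fst snd].
  destruct (Nat.ltb_spec j d); [|discriminate].
  destruct (Rle_dec (INR (pos d j u)) x); [|discriminate].
  destruct (Rle_dec x (INR (pos d j u) + 1)); [|discriminate]. auto.
Qed.

Lemma weight_nonneg d g h : Forall (fun pw => 0 <= snd pw) g -> 0 <= weight_of d g h.
Proof.
  induction g as [|a g IH]; intros Hg.
  - unfold weight_of; simpl; lra.
  - inversion Hg; subst. rewrite weight_cons. specialize (IH H2).
    destruct (tst d h a); lra.
Qed.

Lemma weight_ge d g h pw : Forall (fun pw => 0 <= snd pw) g -> In pw g -> tst d h pw = true ->
  snd pw <= weight_of d g h.
Proof.
  induction g as [|a g IH]; intros Hg Hin Ht; [destruct Hin|].
  inversion Hg; subst. rewrite weight_cons. destruct Hin as [<-|Hin].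
  - rewrite Ht. pose proof (weight_nonneg d g h H2). lra.
  - specialize (IH H2 Hin Ht). destruct (tst d h a); lra.
Qed.

Definition ones (T : list point) : list (point * R) := map (fun p => (p, 1)) T.

Lemma total_ones T : total_weight (ones T) = INR (length T).
Proof.
  induction T as [|a T IH]; [reflexivity|].
  unfold total_weight in *. simpl. rewrite IH. destruct (length T); simpl; lra.
Qed.

Lemma transversal_cover d Hl T : is_transversal d Hl T -> is_frac_cover d Hl (ones T).
Proof.
  intros HT. split.
  - apply Forall_forall. intros x Hx. unfold ones in Hx. apply in_map_iff in Hx.
    destruct Hx as [p [<- _]]. simpl; lra.
  - intros h Hin. destruct (HT h Hin) as [p [Hp Hm]].
    apply (weight_ge d (ones T) h (p, 1)).
    + apply Forall_forall. intros x Hx. unfold ones in Hx. apply in_map_iff in Hx.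
      destruct Hx as [q [<- _]]. simpl; lra.
    + unfold ones. apply (in_map (fun p => (p, 1))). exact Hp.
    + apply mem_tst. exact Hm.
Qed.

Lemma sum_if {A} (f : A -> bool) c l :
  fold_right Rplus 0 (map (fun x => if f x then c else 0) l) = c * INR (length (filter f l)).
Proof.
  induction l as [|a l IH]; cbn [map fold_right filter length]; [simpl; ring|].
  destruct (f a); cbn [filter length]; rewrite IH; [rewrite S_INR|]; ring.
Qed.

Lemma filter_map' {A B} (f : B -> bool) (g : A -> B) l :
  filter f (map g l) = map g (filter (fun x => f (g x)) l).
Proof. induction l as [|a l IH]; simpl; [reflexivity|]. destruct (f (g a)); simpl; congruence. Qed.

Lemma close_nat a b x : INR a <= x <= INR a + 1 -> INR b <= x <= INR b + 1 -> (a <= b + 1)%nat.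
Proof. intros. apply INR_le. rewrite plus_INR, INR_1. lra. Qed.

Lemma load2 d pw : (length (filter (fun u => tst d (E d u) pw) (seq 0 (2*d))) <= 2)%nat.
Proof.
  pose proof (NoDup_filter (fun u => tst d (E d u) pw) (seq_NoDup (2*d) 0)) as Hnd.
  assert (Hin : forall u, In u (filter (fun u => tst d (E d u) pw) (seq 0 (2*d))) ->
     (u < 2*d)%nat /\ (fst (fst pw) < d)%nat /\
     INR (pos d (fst (fst pw)) u) <= snd (fst pw) <= INR (pos d (fst (fst pw)) u) + 1).
  { intros u Hu. apply filter_In in Hu. destruct Hu as [Hs Ht]. apply in_seq in Hs.
    apply tst_E in Ht. split; [lia| exact Ht]. }
  destruct (filter (fun u => tst d (E d u) pw) (seq 0 (2*d))) as [|a [|b [|c l]]];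
    simpl; try lia.
  exfalso.
  inversion Hnd as [|? ? Ha Hnd2]; subst. inversion Hnd2 as [|? ? Hb _]; subst.
  assert (a <> b) by (intro; apply Ha; subst; simpl; auto).
  assert (a <> c) by (intro; apply Ha; subst; simpl; auto).
  assert (b <> c) by (intro; apply Hb; subst; simpl; auto).
  destruct (Hin a ltac:(simpl; auto)) as [Ha1 [Hj Ha2]].
  destruct (Hin b ltac:(simpl; auto)) as [Hb1 [_ Hb2]].
  destruct (Hin c ltac:(simpl; auto)) as [Hc1 [_ Hc2]].
  set (j := fst (fst pw)) in *.
  pose proof (close_nat _ _ _ Ha2 Hb2). pose proof (close_nat _ _ _ Hb2 Ha2).
  pose proof (close_nat _ _ _ Ha2 Hc2). pose proof (close_nat _ _ _ Hc2 Ha2).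
  pose proof (close_nat _ _ _ Hc2 Hb2). pose proof (close_nat _ _ _ Hb2 Hc2).
  assert (pos d j a <> pos d j b) by (intro E1; apply (pos_inj d j a b) in E1; auto).
  assert (pos d j a <> pos d j c) by (intro E1; apply (pos_inj d j a c) in E1; auto).
  assert (pos d j b <> pos d j c) by (intro E1; apply (pos_inj d j b c) in E1; auto).
  lia.
Qed.

Lemma sum_ge_len {A} (f : A -> R) l : (forall x, In x l -> 1 <= f x) ->
  INR (length l) <= fold_right Rplus 0 (map f l).
Proof.
  induction l as [|a l IH]; intros Hf; cbn [map fold_right length]; [simpl; lra|].
  rewrite S_INR. pose proof (Hf a (or_introl eq_refl)).
  assert (INR (length l) <= fold_right Rplus 0 (map f l)) by (apply IH; intros; apply Hf; simpl; auto).
  lra.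
Qed.

Lemma sum_plus {A} (f g : A -> R) l :
  fold_right Rplus 0 (map (fun x => f x + g x) l) =
  fold_right Rplus 0 (map f l) + fold_right Rplus 0 (map g l).
Proof. induction l; simpl; [ring|]. rewrite IHl; ring. Qed.

Lemma double_count d g : Forall (fun pw => 0 <= snd pw) g ->
  fold_right Rplus 0 (map (weight_of d g) (Hd d)) <= 2 * total_weight g.
Proof.
  induction g as [|pw g IH]; intros Hg.
  - unfold total_weight. simpl.
    assert (forall l : list sepint, fold_right Rplus 0 (map (weight_of d []) l) = 0).
    { induction l; simpl; [reflexivity|]. rewrite IHl. unfold weight_of; simpl; ring. }
    rewrite H. lra.
  - inversion Hg; subst. specialize (IH H2).
    assert (Heq : map (weight_of d (pw :: g)) (Hd d) =
       map (fun h => (if tst d h pw then snd pw else 0) + weight_of d g h) (Hd d)).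
    { apply map_ext. intros; apply weight_cons. }
    rewrite Heq, sum_plus, sum_if.
    assert (Hl : (length (filter (fun h => tst d h pw) (Hd d)) <= 2)%nat).
    { unfold Hd. rewrite filter_map', length_map. apply load2. }
    apply le_INR in Hl. replace (INR 2) with 2 in Hl by (simpl; lra).
    unfold total_weight in *. cbn [map fold_right].
    assert (snd pw * INR (length (filter (fun h => tst d h pw) (Hd d))) <= snd pw * 2).
    { apply Rmult_le_compat_l; auto. }
    lra.
Qed.

Lemma tau_star_lb d g : is_frac_cover d (Hd d) g -> INR d <= total_weight g.
Proof.
  intros [Hg Hc].
  pose proof (double_count d g Hg).
  pose proof (sum_ge_len (weight_of d g) (Hd d) Hc).
  unfold Hd in H0 at 1. rewrite length_map, length_seq, mult_INR in H0. simpl in H0. lra.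
Qed.

Definition T0 d : list point := map (fun i => cp d i (d + i)) (seq 0 d).

Lemma T0_trans d : is_transversal d (Hd d) (T0 d).
Proof.
  intros h Hin. unfold Hd in Hin. apply in_map_iff in Hin. destruct Hin as [u [<- Hu]].
  apply in_seq in Hu.
  destruct (Nat.ltb_spec u d).
  - exists (cp d u (d + u)). split.
    + unfold T0. apply (in_map (fun i => cp d i (d + i))). apply in_seq. lia.
    + apply cp_mem; lia.
  - exists (cp d (u - d) (d + (u - d))). split.
    + unfold T0. apply (in_map (fun i => cp d i (d + i))). apply in_seq. lia.
    + assert (Heu : E d u = E d (d + (u - d))) by (f_equal; lia).
      rewrite Heu. apply cp_mem; lia.
Qed.

Theorem mainTheorem14 (d : nat) (hd : (1 <= d)%nat) :
  exists H : list sepint,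
    is_hypergraph d H /\
    nu_eq d H 1 /\ tau_eq d H d /\ tau_star_eq d H (INR d).
Proof.
  exists (Hd d). split; [|split; [|split]].
  - apply Forall_forall. intros h Hin. unfold Hd in Hin. apply in_map_iff in Hin.
    destruct Hin as [u [<- _]]. intros j a b Heq. unfold E in Heq. injection Heq as <- <-. lra.
  - split.
    + exists [E d 0]. split; [|reflexivity]. split; [|split].
      * intros x [<-|[]]. unfold Hd. apply in_map. apply in_seq. lia.
      * constructor; [intros []|constructor].
      * constructor; constructor.
    + intros M [Hinc [_ Hf]]. destruct M as [|a [|b M']]; simpl; try lia. exfalso.
      inversion Hf as [|? ? Hfa _]; subst. inversion Hfa as [|? ? Hab _]; subst.
      assert (Ha : In a (Hd d)) by (apply Hinc; simpl; auto).
      assert (Hb : In b (Hd d)) by (apply Hinc; simpl; auto).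
      unfold Hd in Ha, Hb. apply in_map_iff in Ha, Hb.
      destruct Ha as [u [<- Hu]]. destruct Hb as [v [<- Hv]]. apply in_seq in Hu, Hv.
      apply (Hab (cp d u v)). apply cp_mem; lia.
  - split.
    + exists (T0 d). split; [apply T0_trans|]. unfold T0. rewrite length_map, length_seq. reflexivity.
    + intros T HT. apply INR_le. rewrite <- total_ones. apply tau_star_lb.
      apply transversal_cover. exact HT.
  - split.
    + exists (ones (T0 d)). split; [apply transversal_cover, T0_trans|].
      rewrite total_ones. unfold T0. rewrite length_map, length_seq. reflexivity.
    + apply tau_star_lb.
Qed.
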